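(* Consider the D2EAL algorithm (without periodic reset) described in the context with horizon $T\ge1$ and $\eta_\alpha,\eta_w>0$, and fix $i\in[N]$. Assume: (Assumption 1) $\Omega_i(t)\subseteq\Omega_i(t-1)$ for all $t=1,\dots,T$; (Assumption 2) $|l(x_1,y)-l(x_2,y)|\le L_1\|x_1-x_2\|$ for all $x_1,x_2\in\mathcal A$, $y\in\mathcal Y$, for some constant $L_1\ge0$; (Assumption 3) there are nonnegative numbers $\delta_1,\dots,\delta_T$ with $\|f_{t,k}-f_{t,j}\|\le\delta_t$ for all $k,j\in[N]$, $t=1,\dots,T$; (Assumption 4) with $i^*\in\arg\min_{j\in[N]}L_{T,j}$, one has $L_{T,i^*}\le c_0T^{1-\alpha}$ for some constants $c_0\ge0$ and $\alpha\in(0,1]$. Let $\Delta_o\ge\sum_{t=1}^T\delta_t$ and $j^*\in\arg\min_{j\in[N]}\bar L_{T,j}$. Then $$R_i^{GS}(T):=\hat L_{T,i}-\bar L_{T,j^*}\le\frac{\eta_wT}{8}+\frac{\log d_i(0)}{\eta_w}+\frac{\eta_\alpha T}{8}+\frac{\log2}{\eta_\alpha}+L_1\Delta_o+c_0T^{1-\alpha}.$$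
   Context: Setup. There are $N\ge 1$ agents indexed by $i\in[N]$ and a horizon $T\ge1$. The outcome space $\mathcal Y$ and action space $\mathcal A$ are convex subsets of $\mathbb R^n$, $\|\cdot\|$ is the Euclidean norm. The loss $l:\mathcal A\times\mathcal Y\to[0,1]$ is convex in its first argument. The target sequence $y_1,\dots,y_T\in\mathcal Y$ is arbitrary. For each agent $i$ and each $t\ge1$, an ''expert'' supplies an arbitrary prediction $f_{t,i}\in\mathcal A$ of $y_t$ (available at time $t-1$). Agents communicate over a time-varying undirected graph; $\Omega_i(t)$ is the set of neighbours of agent $i$ at time $t$, $\Lambda_i(t):=\Omega_i(t)\cup\{i\}$ and $d_i(t):=|\Lambda_i(t)|$. D2EAL (without periodic reset). Initialize $\hat f_{0,i}=f_{1,i}$, $\hat\alpha_i(0)=\hat\alpha'_i(0)=\hat w_{ii}(0)=1$ for all $i$. For $t=0,1,\dots,T-1$, each agent $i$ computes: $\alpha_i(t)=\hat\alpha_i(t)/(\hat\alpha_i(t)+\hat\alpha'_i(t))$; individual prediction $\bar f_{t+1,i}=\alpha_i(t)f_{t+1,i}+(1-\alpha_i(t))\hat f_{t,i}$; social weights $w_{ij}(t)=\hat w_{jj}(t)/\sum_{j'\in\Lambda_i(t)}\hat w_{j'j'}(t)$ for $j\in\Lambda_i(t)$ and $w_{ij}(t)=0$ otherwise; social prediction $\hat f_{t+1,i}=\sum_{j\in\Lambda_i(t)}w_{ij}(t)\bar f_{t+1,j}$. After $y_{t+1}$ is revealed, define the losses $l_{t+1,i}=l(f_{t+1,i},y_{t+1})$,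 $\hat l^-_{t+1,i}=l(\hat f_{t,i},y_{t+1})$, $\bar l_{t+1,i}=l(\bar f_{t+1,i},y_{t+1})$, $\hat l_{t+1,i}=l(\hat f_{t+1,i},y_{t+1})$, and update $\hat\alpha_i(t+1)=\hat\alpha_i(t)e^{-\eta_\alpha l_{t+1,i}}$, $\hat\alpha'_i(t+1)=\hat\alpha'_i(t)e^{-\eta_\alpha \hat l^-_{t+1,i}}$, $\hat w_{ii}(t+1)=\hat w_{ii}(t)e^{-\eta_w\bar l_{t+1,i}}$. Cumulative losses: $L_{T,i}=\sum_{t=1}^T l_{t,i}$, $\hat L^-_{T,i}=\sum_{t=1}^T\hat l^-_{t,i}$, $\bar L_{T,i}=\sum_{t=1}^T\bar l_{t,i}$, $\hat L_{T,i}=\sum_{t=1}^T\hat l_{t,i}$. *)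

(* Defs.v *)
From HB Require Import structures.
From mathcomp Require Import all_boot all_order all_algebra.
From mathcomp Require Import reals.
From mathcomp Require Import sequences exp.
Set Implicit Arguments. Unset Strict Implicit. Unset Printing Implicit Defensive.
Import Order.TTheory GRing.Theory Num.Theory.
Local Open Scope ring_scope.

Definition enorm (R : realType) (n : nat) (v : 'rV[R]_n) : R :=
  Num.sqrt (\sum_(k < n) v 0 k ^+ 2).

Definition convex_set (R : realType) (n : nat) (S : 'rV[R]_n -> Prop) : Prop :=
  forall x1 x2 (lam : R), S x1 -> S x2 -> 0 <= lam <= 1 ->
    S (lam *: x1 + (1 - lam) *: x2).

Definition Lam (N : nat) (Om : nat -> 'I_N -> {set 'I_N}) (t : nat) (i : 'I_N)
  : {set 'I_N} := i |: Om t i.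

(* State of agent i after t rounds: hat f_{t,i}, hat alpha_i(t), hat alpha'_i(t), hat w_ii(t). *)
Record st (R : realType) (n : nat) := St
  { st_f : 'rV[R]_n; st_a : R; st_a' : R; st_w : R }.

Definition alpha_of (R : realType) (n : nat) (s : st R n) : R :=
  st_a s / (st_a s + st_a' s).

(* individual prediction  bar f_{t+1,j} computed from the states at time t *)
Definition bar_of (R : realType) (n N : nat) (f : nat -> 'I_N -> 'rV[R]_n)
  (s : 'I_N -> st R n) (t : nat) (j : 'I_N) : 'rV[R]_n :=
  alpha_of (s j) *: f t.+1 j + (1 - alpha_of (s j)) *: st_f (s j).

Definition wgt (R : realType) (n N : nat) (Om : nat -> 'I_N -> {set 'I_N})
  (s : 'I_N -> st R n) (t : nat) (i j : 'I_N) : R :=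
  if j \in Lam Om t i then st_w (s j) / \sum_(j' in Lam Om t i) st_w (s j') else 0.

Definition hat_of (R : realType) (n N : nat) (f : nat -> 'I_N -> 'rV[R]_n)
  (Om : nat -> 'I_N -> {set 'I_N}) (s : 'I_N -> st R n) (t : nat) (i : 'I_N)
  : 'rV[R]_n :=
  \sum_(j in Lam Om t i) wgt Om s t i j *: bar_of f s t j.

Fixpoint d2eal (R : realType) (n N : nat) (l : 'rV[R]_n -> 'rV[R]_n -> R)
  (eta_a eta_w : R) (f : nat -> 'I_N -> 'rV[R]_n) (y : nat -> 'rV[R]_n)
  (Om : nat -> 'I_N -> {set 'I_N}) (t : nat) : 'I_N -> st R n :=
  match t with
  | 0 => fun i => St (f 1%N i) 1 1 1
  | t'.+1 =>
    let s := d2eal l eta_a eta_w f y Om t' in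
    fun i => St (hat_of f Om s t' i)
                (st_a (s i) * expR (- (eta_a * l (f t'.+1 i) (y t'.+1))))
                (st_a' (s i) * expR (- (eta_a * l (st_f (s i)) (y t'.+1))))
                (st_w (s i) * expR (- (eta_w * l (bar_of f s t' i) (y t'.+1))))
  end.

Definition hatf (R : realType) (n N : nat) (l : 'rV[R]_n -> 'rV[R]_n -> R)
  (eta_a eta_w : R) (f : nat -> 'I_N -> 'rV[R]_n) (y : nat -> 'rV[R]_n)
  (Om : nat -> 'I_N -> {set 'I_N}) (t : nat) (i : 'I_N) : 'rV[R]_n :=
  st_f (d2eal l eta_a eta_w f y Om t i).

(* bar f_{t,i}, for t >= 1 *)
Definition barf (R : realType) (n N : nat) (l : 'rV[R]_n -> 'rV[R]_n -> R)
  (eta_a eta_w : R) (f : nat -> 'I_N -> 'rV[R]_n) (y : nat -> 'rV[R]_n)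
  (Om : nat -> 'I_N -> {set 'I_N}) (t : nat) (i : 'I_N) : 'rV[R]_n :=
  bar_of f (d2eal l eta_a eta_w f y Om t.-1) t.-1 i.

Definition Lexp (R : realType) (n N : nat) (l : 'rV[R]_n -> 'rV[R]_n -> R)
  (f : nat -> 'I_N -> 'rV[R]_n) (y : nat -> 'rV[R]_n) (T : nat) (i : 'I_N) : R :=
  \sum_(1 <= t < T.+1) l (f t i) (y t).

Definition Lbar (R : realType) (n N : nat) (l : 'rV[R]_n -> 'rV[R]_n -> R)
  (eta_a eta_w : R) (f : nat -> 'I_N -> 'rV[R]_n) (y : nat -> 'rV[R]_n)
  (Om : nat -> 'I_N -> {set 'I_N}) (T : nat) (i : 'I_N) : R :=
  \sum_(1 <= t < T.+1) l (barf l eta_a eta_w f y Om t i) (y t).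

Definition Lhat (R : realType) (n N : nat) (l : 'rV[R]_n -> 'rV[R]_n -> R)
  (eta_a eta_w : R) (f : nat -> 'I_N -> 'rV[R]_n) (y : nat -> 'rV[R]_n)
  (Om : nat -> 'I_N -> {set 'I_N}) (T : nat) (i : 'I_N) : R :=
  \sum_(1 <= t < T.+1) l (hatf l eta_a eta_w f y Om t i) (y t).

(* Main.v *)
From HB Require Import structures.
From mathcomp Require Import all_boot all_order all_algebra.
From mathcomp Require Import ring lra.
From mathcomp Require classical_sets.
From mathcomp Require Import reals topology normedtype derive realfun sequences exp interval_inference.
From mathcomp Require convex.
Require Import Defs.
Import Order.TTheory GRing.Theory Num.Theory.
Import numFieldNormedType.Exports.
Local Open Scope ring_scope.

Module HM.
Import classical_sets.
Section DL.
Variable R : realType.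
Implicit Types f g : R -> R.
Lemma dl_add {f g} {x df dg : R} : is_derive x 1 f df -> is_derive x 1 g dg ->
  is_derive x 1 (fun y => f y + g y) (df + dg).
Proof. move=> hf hg; exact: (is_deriveD hf hg). Qed.
Lemma dl_mul {f g} {x df dg : R} : is_derive x 1 f df -> is_derive x 1 g dg ->
  is_derive x 1 (fun y => f y * g y) (f x * dg + g x * df).
Proof. move=> hf hg; exact: (is_deriveM hf hg). Qed.
Lemma dl_opp {f} {x df : R} : is_derive x 1 f df ->
  is_derive x 1 (fun y => - f y) (- df).
Proof. move=> hf; exact: (is_deriveN hf). Qed.
Lemma dl_cst (c x : R) : is_derive x 1 (fun _ => c) 0.
Proof. exact: is_derive_cst. Qed.
Lemma dl_id (x : R) : is_derive x 1 (fun y => y) 1.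
Proof. exact: is_derive_id. Qed.
Lemma dl_inv {f} {x df : R} : f x != 0 -> is_derive x 1 f df ->
  is_derive x 1 (fun y => (f y)^-1) (- (f x) ^- 2 * df).
Proof. move=> h hf; exact: (is_deriveV h hf). Qed.
Lemma dl_exp {f} {x df : R} : is_derive x 1 f df ->
  is_derive x 1 (fun y => expR (f y)) (expR (f x) * df).
Proof. move=> hf; exact: (@is_derive1_comp R expR f x _ _ _ hf). Qed.
Lemma dl_ln {f} {x df : R} : 0 < f x -> is_derive x 1 f df ->
  is_derive x 1 (fun y => ln (f y)) ((f x)^-1 * df).
Proof. move=> h hf; exact: (@is_derive1_comp R (@ln R) f x _ _ (is_derive1_ln h) hf). Qed.
Lemma dl_eq {f} {x df df' : R} : is_derive x 1 f df -> df = df' -> is_derive x 1 f df'.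
Proof. by move=> h <-. Qed.

Lemma cont_of {f} {df : R -> R} (a b : R) : (forall x : R, is_derive x 1 f (df x)) ->
  {within `[a, b], continuous f}%classic.
Proof.
move=> h; apply: continuous_subspaceT => r.
apply/differentiable_continuous/derivable1_diffP.
by case: (h r).
Qed.

Lemma hoeff (p u : R) : 0 <= p <= 1 -> 0 <= u ->
  1 - p + p * expR (- u) <= expR (- (u * p) + u ^+ 2 / 8).
Proof.
move=> /andP[p0 p1] u0.
pose D := fun y : R => 1 - p + p * expR (- y).
have Dpos y : 0 < D y.
  have e0 : 0 < expR (- y) by apply: expR_gt0.
  rewrite /D; nra.
have dD (y : R) : is_derive y 1 D (p * (expR (- y) * -1)).
  rewrite /D; apply: (dl_eq (dl_add (dl_cst _ _) (dl_mul (dl_cst _ _)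
     (dl_exp (dl_opp (dl_id _)))))).
  by rewrite /=; ring.
pose q := fun y : R => p * expR (- y) * (D y)^-1.
pose g1 := fun y : R => (- p) + (1/4) * y + (p * expR (- y)) * (D y)^-1.
pose g2 := fun y : R => (q y - 1/2) ^+ 2.
have dg1 (y : R) : is_derive y 1 g1 (g2 y).
  rewrite {1}/g1; apply: (dl_eq (dl_add (dl_add (dl_cst _ _) (dl_mul (dl_cst _ _) (dl_id _)))
    (dl_mul (dl_mul (dl_cst _ _) (dl_exp (dl_opp (dl_id _))))
            (dl_inv (lt0r_neq0 (Dpos y)) (dD y))))).
  rewrite /g2 /q /=.
  have := Dpos y; rewrite /D => Dy.
  field; exact: lt0r_neq0.
pose g := fun y : R => (- p) * y + (1/8) * (y * y) + (-1) * ln (D y).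
have dg (y : R) : is_derive y 1 g (g1 y).
  rewrite {1}/g; apply: (dl_eq (dl_add (dl_add (dl_mul (dl_cst _ _) (dl_id _))
     (dl_mul (dl_cst _ _) (dl_mul (dl_id _) (dl_id _))))
     (dl_mul (dl_cst _ _) (dl_ln (Dpos y) (dD y))))).
  rewrite /g1 /=.
  have := Dpos y; rewrite /D => Dy.
  field; exact: lt0r_neq0.
have D0 : D 0 = 1 by rewrite /D oppr0 expR0 mulr1 subrK.
have g1ge0 v : 0 <= v -> 0 <= g1 v.
  move=> v0.
  have [c _ ] := MVT_segment v0 (fun x _ => dg1 x) (cont_of _ _ dg1).
  have -> : g1 0 = 0.
    by rewrite /g1 D0 oppr0 expR0 invr1 !mulr1 mulr0 addr0 addNr.
  rewrite subr0 => ->.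
  apply: mulr_ge0; last by rewrite subr0.
  exact: sqr_ge0.
have [c /andP[c0 cu] ] := MVT_segment u0 (fun x _ => dg x) (cont_of _ _ dg).
have -> : g 0 = 0.
  by rewrite /g D0 ln1 !mulr0 !addr0.
rewrite subr0 => gu.
have gpos : 0 <= g u by rewrite gu; apply: mulr_ge0; [exact: g1ge0 | rewrite subr0].
have -> : 1 - p + p * expR (- u) = expR (ln (D u)) by rewrite lnK //; exact: Dpos.
rewrite ler_expR.
move: gpos; rewrite /g /=.
lra.
Qed.

Lemma chord (e x : R) : 0 <= x -> x <= 1 -> expR (- (e * x)) <= 1 - x + x * expR (- e).
Proof.
move=> x0 x1.
have := convex_expR (Itv01 x0 x1) (- e) 0.
rewrite !convex.convRE /= expR0 mulr0 addr0 mulr1 => H.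
apply: le_trans (le_trans H _); first by rewrite mulrN mulrC.
by rewrite addrC.
Qed.
End DL.
End HM.
Import HM.

Lemma cvx_list (R : realType) (n : nat) (A Y : 'rV[R]_n -> Prop)
  (l : 'rV[R]_n -> 'rV[R]_n -> R) (yy : 'rV[R]_n) (I : Type) (r : seq I) :
  convex_set A -> Y yy ->
  (forall yy, Y yy -> forall x1 x2 (lam : R), A x1 -> A x2 -> 0 <= lam <= 1 ->
     l (lam *: x1 + (1 - lam) *: x2) yy <= lam * l x1 yy + (1 - lam) * l x2 yy) ->
  forall (c : I -> R) (x : I -> 'rV[R]_n), (forall j, 0 < c j) ->
  \sum_(j <- r) c j = 1 -> (forall j, A (x j)) ->
  A (\sum_(j <- r) c j *: x j) /\ l (\sum_(j <- r) c j *: x j) yy <= \sum_(j <- r) c j * l (x j) yy.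
Proof.
move=> cA Yy cl; elim: r => [|a r IH] c x cpos.
  by rewrite big_nil => /eqP; rewrite eq_sym oner_eq0.
rewrite !big_cons => hs xA.
case: r IH hs => [|b r] IH hs.
  rewrite !big_nil !addr0 in hs *.
  by rewrite hs scale1r mul1r; split.
set s := \sum_(j <- b :: r) c j in hs.
have spos : 0 < s by rewrite /s big_cons; apply: ltr_pwDl (cpos b) (sumr_ge0 _ (fun j _ => ltW (cpos j))).
pose c' := fun j => c j / s.
have hc' : \sum_(j <- b :: r) c' j = 1 by rewrite /c' -mulr_suml divff // gt_eqF.
have [zA zl] := IH c' x (fun j => divr_gt0 (cpos j) spos) hc' xA.
have e1 : \sum_(j <- b :: r) c j *: x j = (1 - c a) *: \sum_(j <- b :: r) c' j *: x j.
  have -> : 1 - c a = s by rewrite -hs addrC addKr.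
  rewrite scaler_sumr; apply: eq_bigr => j _.
  by rewrite scalerA /c' mulrCA divff ?mulr1 // gt_eqF.
have e2 : \sum_(j <- b :: r) c j * l (x j) yy = (1 - c a) * \sum_(j <- b :: r) c' j * l (x j) yy.
  have -> : 1 - c a = s by rewrite -hs addrC addKr.
  rewrite mulr_sumr; apply: eq_bigr => j _.
  by rewrite mulrA /c' mulrCA divff ?mulr1 // gt_eqF.
have ca01 : 0 <= c a <= 1.
  by rewrite (ltW (cpos a)) /= -hs lerDl ltW.
rewrite e1 e2; split; first exact: (cA _ _ _ (xA a) zA ca01).
apply: le_trans (cl _ Yy _ _ _ (xA a) zA ca01) _.
apply: lerD => //; apply: ler_wpM2l => //.
by rewrite subr_ge0; case/andP: ca01.
Qed.

Lemma mix (R : realType) (I : finType) (S : {set I}) (c x : I -> R) (eta : R) :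
  0 <= eta -> (forall j, 0 <= c j) -> (forall j, j \in S -> 0 <= x j <= 1) ->
  0 < \sum_(j in S) c j ->
  \sum_(j in S) c j * expR (- (eta * x j)) <=
  (\sum_(j in S) c j) * expR (- (eta * ((\sum_(j in S) c j * x j) / \sum_(j in S) c j)) + eta ^+ 2 / 8).
Proof.
move=> eta0 c0 x01 Cpos.
set C := \sum_(j in S) c j in Cpos *.
set M := \sum_(j in S) c j * x j.
have M0 : 0 <= M by apply: sumr_ge0 => j jS; case/andP: (x01 j jS) => h _; exact: mulr_ge0.
have MC : M <= C by apply: ler_sum => j jS; case/andP: (x01 j jS) => _ h; apply: ler_piMr.
have m0 : 0 <= M / C by apply: divr_ge0 => //; exact: ltW.
have m1 : M / C <= 1 by rewrite ler_pdivrMr // mul1r.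
apply: le_trans (_ : C * (1 - M / C + M / C * expR (- eta)) <= _); last first.
  by apply: ler_wpM2l; [exact: ltW | apply: hoeff; rewrite ?m0 ?m1].
have -> : C * (1 - M / C + M / C * expR (- eta)) = \sum_(j in S) c j * (1 - x j + x j * expR (- eta)).
  have -> : \sum_(j in S) c j * (1 - x j + x j * expR (- eta)) =
     \sum_(j in S) (c j - c j * x j + c j * x j * expR (- eta)).
    by apply: eq_bigr => j _; ring.
  rewrite big_split /= sumrB -mulr_suml -/C -/M.
  by field; rewrite gt_eqF.
apply: ler_sum => j jS; apply: ler_wpM2l => //.
by case/andP: (x01 j jS) => h1 h2; apply: chord.
Qed.

Lemma alpha01 (R : realType) (n : nat) (s : st R n) :
  0 < st_a s -> 0 < st_a' s -> 0 <= alpha_of s <= 1.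
Proof.
move=> a0 a'0; rewrite /alpha_of; apply/andP; split.
  by apply: divr_ge0; apply: ltW => //; apply: addr_gt0.
by rewrite ler_pdivrMr ?addr_gt0 // mul1r lerDl ltW.
Qed.

Lemma bar_ok (R : realType) (n N : nat) (A Y : 'rV[R]_n -> Prop)
  (l : 'rV[R]_n -> 'rV[R]_n -> R) (f : nat -> 'I_N -> 'rV[R]_n)
  (s : 'I_N -> st R n) (t : nat) (j : 'I_N) (yy : 'rV[R]_n) :
  convex_set A -> Y yy ->
  (forall yy, Y yy -> forall x1 x2 (lam : R), A x1 -> A x2 -> 0 <= lam <= 1 ->
     l (lam *: x1 + (1 - lam) *: x2) yy <= lam * l x1 yy + (1 - lam) * l x2 yy) ->
  A (f t.+1 j) -> A (st_f (s j)) -> 0 < st_a (s j) -> 0 < st_a' (s j) ->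
  A (bar_of f s t j) /\
  l (bar_of f s t j) yy <= alpha_of (s j) * l (f t.+1 j) yy + (1 - alpha_of (s j)) * l (st_f (s j)) yy.
Proof.
move=> cA Yy cl fA sA a0 a'0.
have h := @alpha01 _ _ _ a0 a'0.
split; first exact: (cA _ _ _ fA sA h).
exact: cl.
Qed.

Lemma hat_ok (R : realType) (n N : nat) (A Y : 'rV[R]_n -> Prop)
  (l : 'rV[R]_n -> 'rV[R]_n -> R) (f : nat -> 'I_N -> 'rV[R]_n)
  (Om : nat -> 'I_N -> {set 'I_N})
  (s : 'I_N -> st R n) (t : nat) (i : 'I_N) (yy : 'rV[R]_n) :
  convex_set A -> Y yy ->
  (forall yy, Y yy -> forall x1 x2 (lam : R), A x1 -> A x2 -> 0 <= lam <= 1 ->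
     l (lam *: x1 + (1 - lam) *: x2) yy <= lam * l x1 yy + (1 - lam) * l x2 yy) ->
  (forall k, A (bar_of f s t k)) -> (forall k, 0 < st_w (s k)) ->
  A (hat_of f Om s t i) /\
  l (hat_of f Om s t i) yy <= \sum_(j in Lam Om t i) (st_w (s j) / \sum_(j' in Lam Om t i) st_w (s j')) * l (bar_of f s t j) yy.
Proof.
move=> cA Yy cl bA wpos.
set W := \sum_(j' in Lam Om t i) st_w (s j').
have iL : i \in Lam Om t i by rewrite /Lam setU11.
have Wpos : 0 < W.
  rewrite /W (bigD1 i) //=; apply: lt_le_trans (wpos i) _.
  by rewrite lerDl; apply: sumr_ge0 => j _; exact: ltW.
have -> : hat_of f Om s t i = \sum_(j <- enum (Lam Om t i)) (st_w (s j) / W) *: bar_of f s t j.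
  rewrite big_enum /hat_of; apply: eq_bigr => j jL.
  by rewrite /wgt jL.
rewrite -big_enum.
apply: (@cvx_list R n A Y l yy _ (enum (Lam Om t i)) cA Yy cl (fun j => st_w (s j) / W) (bar_of f s t)) => //.
- by move=> j; apply: divr_gt0.
- by rewrite big_enum -mulr_suml divff // gt_eqF.
Qed.

Lemma sum_sub (R : realType) (I : finType) (A B : {set I}) (F : I -> R) :
  A \subset B -> (forall j, 0 <= F j) -> \sum_(j in A) F j <= \sum_(j in B) F j.
Proof.
move=> AB F0.
rewrite [X in _ <= X](big_setID A) /= (setIidPr AB) lerDl.
by apply: sumr_ge0.
Qed.

Lemma mix2 (R : realType) (eta a a' x x' : R) :
  0 <= eta -> 0 < a -> 0 < a' -> 0 <= x <= 1 -> 0 <= x' <= 1 ->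
  a * expR (- (eta * x)) + a' * expR (- (eta * x')) <=
  (a + a') * expR (- (eta * (a / (a + a') * x + (1 - a / (a + a')) * x')) + eta ^+ 2 / 8).
Proof.
move=> eta0 a0 a'0 /andP[x0 x1] /andP[x'0 x'1].
have S0 : 0 < a + a' by apply: addr_gt0.
set al := a / (a + a').
have al0 : 0 <= al by apply: divr_ge0; apply: ltW.
have al1 : al <= 1 by rewrite ler_pdivrMr // mul1r lerDl ltW.
set p := al * x + (1 - al) * x'.
have p0 : 0 <= p by rewrite /p; apply: addr_ge0; apply: mulr_ge0 => //; rewrite subr_ge0.
have p1 : p <= 1 by rewrite /p; nra.
apply: le_trans (_ : (a + a') * (1 - p + p * expR (- eta)) <= _); last first.
  by apply: ler_wpM2l; [exact: ltW | apply: hoeff; rewrite ?p0 ?p1].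
have -> : (a + a') * (1 - p + p * expR (- eta)) =
   a * (1 - x + x * expR (- eta)) + a' * (1 - x' + x' * expR (- eta)).
  by rewrite /p /al; field; rewrite gt_eqF.
apply: lerD.
  by apply: ler_wpM2l; [exact: ltW | exact: chord].
by apply: ler_wpM2l; [exact: ltW | exact: chord].
Qed.

Theorem theorem2 (R : realType) (n N : nat)
  (A Y : 'rV[R]_n -> Prop) (l : 'rV[R]_n -> 'rV[R]_n -> R)
  (f : nat -> 'I_N -> 'rV[R]_n) (y : nat -> 'rV[R]_n)
  (Om : nat -> 'I_N -> {set 'I_N}) (T : nat) (eta_a eta_w : R) (i : 'I_N)
  (L1 : R) (delta : nat -> R) (c0 alpha Delta_o : R) (istar jstar : 'I_N) :
  (* setting *)
  convex_set A -> convex_set Y ->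
  (forall x yy, A x -> Y yy -> 0 <= l x yy <= 1) ->
  (forall yy, Y yy -> forall x1 x2 (lam : R), A x1 -> A x2 -> 0 <= lam <= 1 ->
     l (lam *: x1 + (1 - lam) *: x2) yy <= lam * l x1 yy + (1 - lam) * l x2 yy) ->
  (forall t, Y (y t)) ->
  (forall t k, A (f t k)) ->
  (forall t a b, (b \in Om t a) = (a \in Om t b)) ->
  (forall t a, a \notin Om t a) ->
  (1 <= T)%N -> 0 < eta_a -> 0 < eta_w ->
  (* Assumption 1 *)
  (forall t, (1 <= t <= T)%N -> Om t i \subset Om t.-1 i) ->
  (* Assumption 2 *)
  0 <= L1 ->
  (forall x1 x2 yy, A x1 -> A x2 -> Y yy ->
     `|l x1 yy - l x2 yy| <= L1 * enorm (x1 - x2)) ->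
  (* Assumption 3 *)
  (forall t, (1 <= t <= T)%N -> 0 <= delta t) ->
  (forall t k j, (1 <= t <= T)%N -> enorm (f t k - f t j) <= delta t) ->
  (* Assumption 4 *)
  (forall j, Lexp l f y T istar <= Lexp l f y T j) ->
  0 <= c0 -> 0 < alpha <= 1 ->
  Lexp l f y T istar <= c0 * (T%:R `^ (1 - alpha)) ->
  (* Delta_o and j^* *)
  \sum_(1 <= t < T.+1) delta t <= Delta_o ->
  (forall j, Lbar l eta_a eta_w f y Om T jstar <= Lbar l eta_a eta_w f y Om T j) ->
  Lhat l eta_a eta_w f y Om T i - Lbar l eta_a eta_w f y Om T jstar <=
    eta_w * T%:R / 8 + ln (#|Lam Om 0 i|%:R) / eta_w
    + eta_a * T%:R / 8 + ln 2 / eta_a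
    + L1 * Delta_o + c0 * (T%:R `^ (1 - alpha)).

Proof.
move=> cA cY lrng lcvx yY fA Osym Oirr T1 ea0 ew0 As1 L10 Lip dl0 dlb istarmin c00 alph Listar Dsum jmin.
set s := d2eal l eta_a eta_w f y Om.
have sS t j : s t.+1 j = St (hat_of f Om (s t) t j)
   (st_a (s t j) * expR (- (eta_a * l (f t.+1 j) (y t.+1))))
   (st_a' (s t j) * expR (- (eta_a * l (st_f (s t j)) (y t.+1))))
   (st_w (s t j) * expR (- (eta_w * l (bar_of f (s t) t j) (y t.+1)))) by [].
have inv t : forall j, A (st_f (s t j)) /\ 0 < st_a (s t j) /\ 0 < st_a' (s t j) /\ 0 < st_w (s t j).
  elim: t => [|t IH] j; first by rewrite /s /=; split; [exact: fA | rewrite ltr01].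
  have bA k : A (bar_of f (s t) t k).
    have [a1 [a2 [a3 a4]]] := IH k.
    exact: (@bar_ok R n N A Y l f (s t) t k (y 0) cA (yY 0) lcvx (fA _ _) a1 a2 a3).1.
  rewrite sS /=; have [a1 [a2 [a3 a4]]] := IH j.
  split; first exact: (@hat_ok R n N A Y l f Om (s t) t j (y 0) cA (yY 0) lcvx bA (fun k => (IH k).2.2.2)).1.
  by split; [|split]; apply: mulr_gt0 => //; apply: expR_gt0.
have bok t k := @bar_ok R n N A Y l f (s t) t k (y t.+1) cA (yY _) lcvx (fA _ _)
    (inv t k).1 (inv t k).2.1 (inv t k).2.2.1.
have bA t k : A (bar_of f (s t) t k) := (bok t k).1.
have l01 x yy : A x -> Y yy -> 0 <= l x yy <= 1 by move=> *; apply: lrng.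
have wE t : st_w (s t i) = expR (- (eta_w * Lbar l eta_a eta_w f y Om t i)).
  elim: t => [|t IH]; first by rewrite /Lbar big_geq // mulr0 oppr0 expR0.
  rewrite sS /= IH /Lbar (big_nat_recr t.+1) //= -expRD; congr expR.
  by rewrite /barf /=; ring.
have aE t : st_a (s t i) = expR (- (eta_a * Lexp l f y t i)).
  elim: t => [|t IH]; first by rewrite /Lexp big_geq // mulr0 oppr0 expR0.
  rewrite sS /= IH /Lexp (big_nat_recr t.+1) //= -expRD; congr expR.
  by ring.
pose W t := \sum_(j in Lam Om t i) st_w (s t j).
have Wpos t : 0 < W t.
  rewrite /W (bigD1 i) /=; last by rewrite /Lam setU11.
  apply: lt_le_trans (inv t i).2.2.2 _.
  by rewrite lerDl; apply: sumr_ge0 => j _; exact: ltW (inv t j).2.2.2.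
have Wstep t : (t < T)%N -> W t.+1 <= W t * expR (- (eta_w * l (hatf l eta_a eta_w f y Om t.+1 i) (y t.+1)) + eta_w ^+ 2 / 8).
  move=> tT.
  have sub : Lam Om t.+1 i \subset Lam Om t i.
    by rewrite /Lam setUS //; apply: (As1 t.+1); rewrite ltn0Sn.
  apply: le_trans (@sum_sub R _ _ _ _ sub (fun j => ltW (inv _ j).2.2.2)) _.
  under eq_bigr do rewrite sS /=.
  apply: le_trans (@mix R _ (Lam Om t i) (fun j => st_w (s t j))
     (fun j => l (bar_of f (s t) t j) (y t.+1)) eta_w (ltW ew0)
     (fun j => ltW (inv t j).2.2.2) (fun j _ => l01 _ _ (bA t j) (yY _)) (Wpos t)) _.
  apply: ler_wpM2l; first exact: ltW (Wpos t).
  rewrite ler_expR lerD2r lerN2 ler_pM2l //.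
  have -> : hatf l eta_a eta_w f y Om t.+1 i = hat_of f Om (s t) t i by rewrite /hatf -/s sS.
  have := (@hat_ok R n N A Y l f Om (s t) t i (y t.+1) cA (yY _) lcvx (bA t) (fun k => (inv t k).2.2.2)).2.
  move/le_trans; apply.
  rewrite -/(W t) mulr_suml; apply: ler_sum => j _.
  by rewrite mulrAC.
have Wb t : (t <= T)%N -> W t <= W 0 * expR (- (eta_w * Lhat l eta_a eta_w f y Om t i) + t%:R * (eta_w ^+ 2 / 8)).
  elim: t => [|t IH] tT.
    by rewrite /Lhat big_geq // mulr0 oppr0 mul0r addr0 expR0 mulr1.
  apply: le_trans (Wstep t tT) _.
  apply: le_trans (ler_wpM2r (ltW (expR_gt0 _)) (IH (ltnW tT))) _.
  rewrite -mulrA -expRD; apply: ler_wpM2l; first exact: ltW (Wpos 0).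
  rewrite ler_expR /Lhat (big_nat_recr t.+1) //= -natr1.
  rewrite le_eqVlt; apply/orP; left; apply/eqP; ring.
have W0 : W 0 = #|Lam Om 0 i|%:R.
  rewrite /W (eq_bigr (fun _ => 1)) ?sumr_const //.
have dpos : 0 < (#|Lam Om 0 i|%:R : R) by rewrite -W0.
have soc : Lhat l eta_a eta_w f y Om T i - Lbar l eta_a eta_w f y Om T i <=
    eta_w * T%:R / 8 + ln (#|Lam Om 0 i|%:R) / eta_w.
  have h1 : st_w (s T i) <= W T.
    rewrite /W (bigD1 i) /=; last by rewrite /Lam setU11.
    by rewrite lerDl; apply: sumr_ge0 => j _; exact: ltW (inv T j).2.2.2.
  have := le_trans h1 (Wb T (leqnn T)).
  rewrite wE W0 -{1}(lnK dpos) -expRD ler_expR => h2.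
  rewrite -(ler_pM2l ew0) mulrBr mulrDr (mulrC eta_w (ln _ / _)) divfK ?gt_eqF //.
  move: h2; rewrite expr2; lra.
pose P t := st_a (s t i) + st_a' (s t i).
have Pstep t : P t.+1 <= P t * expR (- (eta_a * l (barf l eta_a eta_w f y Om t.+1 i) (y t.+1)) + eta_a ^+ 2 / 8).
  rewrite /P sS /=.
  have [a1 [a2 [a3 a4]]] := inv t i.
  apply: le_trans (@mix2 R eta_a (st_a (s t i)) (st_a' (s t i)) (l (f t.+1 i) (y t.+1))
      (l (st_f (s t i)) (y t.+1)) (ltW ea0) a2 a3 (l01 _ _ (fA _ _) (yY _)) (l01 _ _ a1 (yY _))) _.
  apply: ler_wpM2l; first by apply: ltW; apply: addr_gt0.
  rewrite ler_expR lerD2r lerN2 ler_pM2l //.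
  exact: (bok t i).2.
have Pb t : P t <= 2 * expR (- (eta_a * Lbar l eta_a eta_w f y Om t i) + t%:R * (eta_a ^+ 2 / 8)).
  elim: t => [|t IH].
    by rewrite /P /Lbar big_geq // mulr0 oppr0 mul0r addr0 expR0 mulr1.
  apply: le_trans (Pstep t) _.
  apply: le_trans (ler_wpM2r (ltW (expR_gt0 _)) IH) _.
  rewrite -mulrA -expRD; apply: ler_wpM2l => //.
  rewrite ler_expR /Lbar (big_nat_recr t.+1) //= -natr1.
  rewrite le_eqVlt; apply/orP; left; apply/eqP; ring.
have two : (0 : R) < 2 by [].
have ind : Lbar l eta_a eta_w f y Om T i - Lexp l f y T i <= eta_a * T%:R / 8 + ln 2 / eta_a.
  have h1 : st_a (s T i) <= P T by rewrite /P lerDl; exact: ltW (inv T i).2.2.1.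
  have := le_trans h1 (Pb T).
  rewrite aE -{1}(lnK two) -expRD ler_expR => h2.
  rewrite -(ler_pM2l ea0) mulrBr mulrDr (mulrC eta_a (ln _ / _)) divfK ?gt_eqF //.
  move: h2; rewrite expr2; lra.
have lip : Lexp l f y T i <= Lexp l f y T istar + L1 * \sum_(1 <= t < T.+1) delta t.
  rewrite /Lexp mulr_sumr -big_split /=; apply: ler_sum_nat => t /andP[t1 tT].
  have tT' : (0 < t <= T)%N by rewrite t1 -ltnS.
  have := Lip _ _ _ (fA t i) (fA t istar) (yY t).
  have := dlb t i istar tT'.
  have := ler_norm (l (f t i) (y t) - l (f t istar) (y t)).
  move=> a b c.
  have d : L1 * enorm (f t i - f t istar) <= L1 * delta t by apply: ler_wpM2l.
  lra.
have Lj0 : 0 <= Lbar l eta_a eta_w f y Om T jstar.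
  apply: sumr_ge0 => t _; rewrite /barf.
  by case/andP: (l01 _ _ (bA t.-1 jstar) (yY t)).
have dD : L1 * \sum_(1 <= t < T.+1) delta t <= L1 * Delta_o by apply: ler_wpM2l.
lra.
Qed.
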